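(* (1) Let $(Y^*,Y,X)$ be random variables with $Y^*,Y\in\{0,1\}$, $X=(\tilde X,Z)\in\mathcal X$, $\tilde X\in\tilde{\mathcal X}$, $Z$ taking values in a finite set $\mathcal Z$. Let $p(x)=\Pr(Y=1\mid X=x)$, $p^*(x)=\Pr(Y^*=1\mid X=x)$, $\underline p_z(\tilde x)=\inf_{z\in\mathcal Z}p(\tilde x,z)$, $\bar p_z(\tilde x)=\sup_{z\in\mathcal Z}p(\tilde x,z)$. Assume: for all $x=(\tilde x,z)$ and $y\in\{0,1\}$, $\Pr(Y=1-y\mid Y^*=y,X=x)=\Pr(Y=1-y\mid Y^*=y,\tilde X=\tilde x)$; for all $\tilde x$, $\Pr(Y=0\mid Y^*=1,\tilde x)+\Pr(Y=1\mid Y^*=0,\tilde x)\le1$; for all $\tilde x$, $\bar p_z(\tilde x)>0$ and $\underline p_z(\tilde x)<1$; and there are known constants $\bar\alpha_0,\bar\alpha_1\in[0,1]$ with $\Pr(Y=1-y\mid Y^*=y,\tilde x)\le\bar\alpha_y$ for $y\in\{0,1\}$ and all $\tilde x$. Then for every $x=(\tilde x,z)\in\mathcal X$, $$p^*(x)\in\left[\frac{p(x)-\min\{\underline p_z(\tilde x),\bar\alpha_0\}}{1-\min\{\underline p_z(\tilde x),\bar\alpha_0\}},\ \frac{p(x)}{\max\{\bar p_z(\tilde x),1-\bar\alpha_1\}}\right].$$ (2) Let $(Y^*,Y,X,W)$ be random variables with $Y^*,Y\in\{0,1\}$, $X\in\mathcal X$, $W$ taking values in a finite set of reals $\mathcal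 W$. Let $p^*(x)=\Pr(Y^*=1\mid X=x)$, $p_W(x,w)=\Pr(Y=1\mid X=x,W=w)$, $\underline p_w(x,w)=\inf_{\tilde w\le w}p_W(x,\tilde w)$, $\bar p_w(x,w)=\sup_{\tilde w\le w}p_W(x,\tilde w)$ (over $\tilde w\in\mathcal W$). Assume: $\Pr(Y^*=1\mid x,w)=p^*(x)$ for all $x,w$; for all $x$, $y\in\{0,1\}$ and $w_1>w_2$ in $\mathcal W$, $\Pr(Y=1-y\mid Y^*=y,x,w_1)\le\Pr(Y=1-y\mid Y^*=y,x,w_2)$; for all $x,w$, $\Pr(Y=1\mid Y^*=0,x,w)+\Pr(Y=0\mid Y^*=1,x,w)\le1$ and $0<p_W(x,w)<1$; and there are known constants $\bar\alpha_0,\bar\alpha_1\in[0,1]$ with $\Pr(Y=1-y\mid Y^*=y,x,w)\le\bar\alpha_y$ for $y\in\{0,1\}$ and all $(x,w)$. Then for every $x\in\mathcal X$, $$p^*(x)\in\left[\sup_{w\in\mathcal W}\left\{\frac{p_W(x,w)-\min\{\underline p_w(x,w),\bar\alpha_0\}}{1-\min\{\underline p_w(x,w),\bar\alpha_0\}}\right\},\ \inf_{w\in\mathcal W}\left\{\frac{p_W(x,w)}{\max\{\bar p_w(x,w),1-\bar\alpha_1\}}\right\}\right].$$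
   Context: $Y^*$ is the true (unobserved) binary outcome and $Y$ the observed, possibly misreported outcome; conditioning on $\tilde x$ (resp. $x,w$) means conditioning on $\tilde X=\tilde x$ (resp. $X=x,W=w$). *)

(* Defs.v *)
From HB Require Import structures.
From mathcomp Require Import all_boot all_order all_algebra.
From mathcomp Require Import boolp classical_sets cardinality reals.
Set Implicit Arguments. Unset Strict Implicit. Unset Printing Implicit Defensive.
Import Order.TTheory GRing.Theory Num.Theory.
Local Open Scope ring_scope.

(* Conditional law of (Y*, Y) given a fixed value of the covariates,
   described by ps = Pr(Y* = 1 | .) and the misclassification kernel
   e y = Pr(Y = 1 - y | Y* = y, .) :  jointYY ps e ys y = Pr(Y* = ys, Y = y | .) *)
Definition jointYY {R : realType} (ps : R) (e : bool -> R) (ys y : bool) : R :=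
  (if ys then ps else 1 - ps) * (if y == ys then 1 - e ys else e ys).

Definition prY1 {R : realType} (ps : R) (e : bool -> R) : R :=
  \sum_(ys : bool) jointYY ps e ys true.

Definition p1 {R : realType} {Xt Z : Type} (ps : Xt -> Z -> R)
  (e : bool -> Xt -> Z -> R) (xt : Xt) (z : Z) : R :=
  prY1 (ps xt z) (fun y => e y xt z).

Definition pW {R : realType} {X : Type} (psW : X -> R -> R)
  (e : bool -> X -> R -> R) (x : X) (w : R) : R :=
  prY1 (psW x w) (fun y => e y x w).

(* Main.v *)
Require Import Defs.
From HB Require Import structures.
From mathcomp Require Import all_boot all_order all_algebra.
From mathcomp Require Import boolp classical_sets cardinality reals.
From mathcomp Require Import lra.
Import Order.TTheory GRing.Theory Num.Theory.
Local Open Scope ring_scope.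
Local Open Scope classical_set_scope.

Lemma prY1E (R : realType) (ps : R) e : prY1 ps e = ps * (1 - e true) + (1 - ps) * e false.
Proof. by rewrite /prY1 big_bool /jointYY /=. Qed.

Lemma L1 {R : realType} {p ps a0 a1 m : R} : 0 <= ps <= 1 -> 0 <= a0 -> 0 <= a1 ->
  a0 + a1 <= 1 -> p = ps * (1 - a1) + (1 - ps) * a0 -> a0 <= m -> m <= 1 ->
  (p - m) / (1 - m) <= ps.
Proof.
move=> /andP[h0 h1] ha0 ha1 hs -> hm hm1.
have [->|hne] := eqVneq m 1; first by rewrite subrr invr0 mulr0.
have hpos : 0 < 1 - m by rewrite subr_gt0 lt_neqAle hne hm1.
rewrite ler_pdivrMr //.
have : 0 <= ps * a1 + (1 - ps) * (m - a0) by apply: addr_ge0; apply: mulr_ge0; lra.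
lra.
Qed.

Lemma L2 {R : realType} {p ps a0 a1 M : R} : 0 <= ps <= 1 -> 0 <= a0 -> 0 <= a1 ->
  p = ps * (1 - a1) + (1 - ps) * a0 -> 0 < M -> M <= 1 - a1 ->
  ps <= p / M.
Proof.
move=> /andP[h0 h1] ha0 ha1 -> hM hM1.
rewrite ler_pdivlMr //.
have : ps * M <= ps * (1 - a1) by apply: ler_wpM2l.
have : 0 <= (1 - ps) * a0 by apply: mulr_ge0; lra.
lra.
Qed.

Theorem proposition4 (R : realType) :
  (* Part (1) *)
  (forall (Xt : Type) (Z : finType)
     (ps : Xt -> Z -> R)            (* p*(x~,z) = Pr(Y*=1 | X=(x~,z)) *)
     (e : bool -> Xt -> Z -> R)     (* e y x~ z = Pr(Y=1-y | Y*=y, X=(x~,z)) *)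
     (a : bool -> Xt -> R)          (* a y x~  = Pr(Y=1-y | Y*=y, X~=x~) *)
     (abar0 abar1 : R),
     (forall xt z, 0 <= ps xt z <= 1) ->
     (forall y xt z, 0 <= e y xt z <= 1) ->
     (forall y xt, 0 <= a y xt <= 1) ->
     (forall xt z y, e y xt z = a y xt) ->
     (forall xt, a true xt + a false xt <= 1) ->
     (forall xt, 0 < sup (range (fun z => p1 ps e xt z))) ->
     (forall xt, inf (range (fun z => p1 ps e xt z)) < 1) ->
     0 <= abar0 <= 1 -> 0 <= abar1 <= 1 ->
     (forall xt, a false xt <= abar0) ->
     (forall xt, a true xt <= abar1) ->
     forall xt z,
       let m := Order.min (inf (range (fun z' => p1 ps e xt z'))) abar0 in
       (p1 ps e xt z - m) / (1 - m) <= ps xt z /\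
       ps xt z <= p1 ps e xt z /
                  Order.max (sup (range (fun z' => p1 ps e xt z'))) (1 - abar1))
  /\
  (* Part (2) *)
  (forall (X : Type) (W : set R)
     (ps : X -> R)                  (* p*(x) = Pr(Y*=1 | X=x) *)
     (psW : X -> R -> R)            (* Pr(Y*=1 | X=x, W=w) *)
     (e : bool -> X -> R -> R)      (* e y x w = Pr(Y=1-y | Y*=y, X=x, W=w) *)
     (abar0 abar1 : R),
     finite_set W -> W !=set0 ->
     (forall x, 0 <= ps x <= 1) ->
     (forall x w, W w -> 0 <= psW x w <= 1) ->
     (forall y x w, W w -> 0 <= e y x w <= 1) ->
     (forall x w, W w -> psW x w = ps x) ->
     (forall y x w1 w2, W w1 -> W w2 -> w2 < w1 -> e y x w1 <= e y x w2) ->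
     (forall x w, W w -> e false x w + e true x w <= 1) ->
     (forall x w, W w -> 0 < pW psW e x w < 1) ->
     0 <= abar0 <= 1 -> 0 <= abar1 <= 1 ->
     (forall x w, W w -> e false x w <= abar0) ->
     (forall x w, W w -> e true x w <= abar1) ->
     forall x,
       let plow w := inf [set pW psW e x v | v in [set v | W v /\ v <= w]] in
       let pup  w := sup [set pW psW e x v | v in [set v | W v /\ v <= w]] in
       sup [set (pW psW e x w - Order.min (plow w) abar0) /
                (1 - Order.min (plow w) abar0) | w in W] <= ps x /\
       ps x <= inf [set pW psW e x w / Order.max (pup w) (1 - abar1) | w in W]).
Proof.
split.
  move=> Xt Z ps e a abar0 abar1 hps he ha hea hsum hsup hinf hab0 hab1 h0 h1 xt z m.
  have hP : forall z', p1 ps e xt z' = ps xt z' * (1 - a true xt) + (1 - ps xt z') * a false xt.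
    by move=> z'; rewrite /p1 prY1E !hea.
  have [ha0 _] := andP (ha false xt); have [ha1 _] := andP (ha true xt).
  have hsx := hsum xt.
  split.
    have hlb : a false xt <= inf (range (fun z' => p1 ps e xt z')).
      apply: lb_le_inf; first by exists (p1 ps e xt z), z.
      move=> _ [z' _ <-]; rewrite hP.
      have [? ?] := andP (hps xt z').
      have : 0 <= ps xt z' * (1 - a true xt - a false xt) by apply: mulr_ge0; lra.
      lra.
    apply: (L1 (hps xt z) ha0 ha1 _ (hP z)); first lra.
      by rewrite /m le_min hlb h0.
    by rewrite /m ge_min; case/andP: hab0 => _ ->; rewrite orbT.
  apply: (L2 (hps xt z) ha0 ha1 (hP z)).
    by rewrite lt_max hsup.
  rewrite ge_max; apply/andP; split; last by have := h1 xt; lra.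
  apply: ge_sup; first by exists (p1 ps e xt z), z.
  move=> _ [z' _ <-]; rewrite hP.
  have [? ?] := andP (hps xt z').
  have : 0 <= (1 - ps xt z') * (1 - a true xt - a false xt) by apply: mulr_ge0; lra.
  lra.
move=> X W ps psW e abar0 abar1 hfin [w0 hw0] hps hpsW he hpsWe hmon hsum hpW hab0 hab1 h0 h1 x plow pup.
have hP : forall w, W w -> pW psW e x w = ps x * (1 - e true x w) + (1 - ps x) * e false x w.
  by move=> w hw; rewrite /pW prY1E hpsWe.
have hE : forall y w, W w -> 0 <= e y x w <= 1 by move=> y w hw; apply: he.
have hpsx := hps x.
have hlow : forall w v, W w -> W v -> v <= w -> e false x w <= pW psW e x v.
  move=> w v hw hv hvw; rewrite hP //.
  have hev : e false x w <= e false x v.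
    move: hvw; rewrite le_eqVlt => /orP[/eqP->//|hlt]; exact: hmon.
  have [? ?] := andP (hE false v hv); have [? ?] := andP (hE true v hv).
  have := hsum x v hv.
  have [? ?] := andP hpsx.
  move=> hs.
  have : 0 <= ps x * (1 - e true x v - e false x v) by apply: mulr_ge0; lra.
  lra.
have hup : forall w v, W w -> W v -> v <= w -> pW psW e x v <= 1 - e true x w.
  move=> w v hw hv hvw; rewrite hP //.
  have hev : e true x w <= e true x v.
    move: hvw; rewrite le_eqVlt => /orP[/eqP->//|hlt]; exact: hmon.
  have [? ?] := andP (hE false v hv); have [? ?] := andP (hE true v hv).
  have := hsum x v hv.
  have [? ?] := andP hpsx.
  move=> hs.
  have : 0 <= (1 - ps x) * (1 - e true x v - e false x v) by apply: mulr_ge0; lra.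
  lra.
split.
  apply: ge_sup; first by exists ((pW psW e x w0 - Order.min (plow w0) abar0) /
                (1 - Order.min (plow w0) abar0)), w0.
  move=> _ [w hw <-].
  have [? ?] := andP (hE false w hw); have [? ?] := andP (hE true w hw).
  have hlb : e false x w <= plow w.
    apply: lb_le_inf; first by exists (pW psW e x w), w.
    by move=> _ [v [hv hvw] <-]; apply: hlow.
  apply: (L1 hpsx _ _ _ (hP w hw)) => //.
      exact: hsum.
    by rewrite le_min hlb h0.
  by rewrite ge_min; case/andP: hab0 => _ ->; rewrite orbT.
apply: lb_le_inf; first by exists (pW psW e x w0 / Order.max (pup w0) (1 - abar1)), w0.
move=> _ [w hw <-].
have [? ?] := andP (hE false w hw); have [? ?] := andP (hE true w hw).
apply: (L2 hpsx _ _ (hP w hw)) => //.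
  rewrite lt_max; apply/orP; left.
  case/andP: (hpW x w hw) => hp _; apply: (lt_le_trans hp).
  apply: ub_le_sup; last by exists w.
  exists 1 => _ [v [hv _] <-]; case/andP: (hpW x v hv) => _ /ltW //.
rewrite ge_max; apply/andP; split; last by have := h1 x w hw; lra.
apply: ge_sup; first by exists (pW psW e x w), w.
by move=> _ [v [hv hvw] <-]; apply: hup.
Qed.
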